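(* Let $G$ be a finite connected regular line graph without isolated vertices, of valency $k>3$. If $V(G)$ can be partitioned into vertex sets of pairwise disjoint cliques of $G$, each of maximum size $\omega(G)$, then $G$ is symmetric with respect to graph entropy, i.e., the uniform distribution on $V(G)$ maximizes $H(G,P)$ over all probability distributions $P$ on $V(G)$.
   Context: A line graph is a graph of the form $L(H)$ for some graph $H$, whose vertices are the edges of $H$, two being adjacent when they share an endpoint. For a finite graph $G$ with $V(G)=\{1,\dots,n\}$, the vertex packing polytope $VP(G)\subseteq\mathbb{R}^n$ is the convex hull of the characteristic vectors of the independent sets of $G$. For a probability distribution $P=(p_1,\dots,p_n)$ on $V(G)$, the graph entropy is $H(G,P)=\min_{\mathbf a\in VP(G)}\sum_{i=1}^n p_i\log(1/a_i)$. *)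

(* Defs.v *)
From HB Require Import structures.
From mathcomp Require Import all_boot all_order all_algebra.
From mathcomp Require Import all_classical all_reals all_analysis.
Set Implicit Arguments. Unset Strict Implicit. Unset Printing Implicit Defensive.
Import Order.TTheory GRing.Theory Num.Theory.
Local Open Scope ring_scope.

Definition simple_graph (V : finType) (e : rel V) : Prop :=
  symmetric e /\ irreflexive e.

Definition connected_graph (V : finType) (e : rel V) : Prop :=
  forall u v : V, connect e u v.

Definition nbhd (V : finType) (e : rel V) (v : V) : {set V} := [set w | e v w].

Definition regular_of (V : finType) (e : rel V) (k : nat) : Prop :=
  forall v : V, #|nbhd e v| = k.

Definition no_isolated (V : finType) (e : rel V) : Prop :=
  forall v : V, exists w : V, e v w.

Definition is_line_graph (V : finType) (e : rel V) : Prop :=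
  exists (T : finType) (eH : rel T), simple_graph eH /\
  exists f : V -> {set T},
    [/\ injective f,
        (forall v, exists x y, eH x y /\ f v = [set x; y]),
        (forall x y, eH x y -> exists v, f v = [set x; y]) &
        (forall u v, u != v -> (e u v <-> f u :&: f v != finset.set0))].

Definition is_clique (V : finType) (e : rel V) (C : {set V}) : bool :=
  [forall x in C, forall y in C, (x != y) ==> e x y].

Definition is_independent (V : finType) (e : rel V) (S : {set V}) : bool :=
  [forall x in S, forall y in S, ~~ e x y].

Definition clique_number (V : finType) (e : rel V) : nat :=
  \max_(C : {set V} | is_clique e C) #|C|.

Definition max_clique_partitionable (V : finType) (e : rel V) : Prop :=
  exists Q : {set {set V}}, finset.partition Q [set: V] /\
    forall C, C \in Q -> is_clique e C /\ #|C| = clique_number e.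

Local Open Scope classical_set_scope.

Definition charvec (R : realType) (V : finType) (S : {set V}) : V -> R :=
  fun i => if i \in S then 1 else 0.

Definition VP (R : realType) (V : finType) (e : rel V) : set (V -> R) :=
  [set a | exists lam : {set V} -> R,
     [/\ (forall S, 0 <= lam S),
         (forall S, ~~ is_independent e S -> lam S = 0),
         \sum_(S : {set V}) lam S = 1 &
         forall i, a i = \sum_(S : {set V}) lam S * @charvec R V S i]].

Definition is_distribution (R : realType) (V : finType) (P : V -> R) : Prop :=
  (forall i, 0 <= P i) /\ \sum_(i : V) P i = 1.

Definition uniform_distribution (R : realType) (V : finType) : V -> R :=
  fun _ => (#|V|%:R)^-1.

(* graph entropy H(G,P) = min_{a in VP(G)} sum_i p_i log(1/a_i), with the
   conventions 0 * log(1/a) = 0 and p * log(1/0) = +oo for p > 0.  The minimum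
   is attained at a point where the objective is finite, so it equals the
   infimum of the finite values, i.e. over those a in VP(G) with a_i > 0
   whenever p_i > 0. *)
Definition graph_entropy (R : realType) (V : finType) (e : rel V) (P : V -> R) : R :=
  inf [set h : R | exists a, VP e a /\ (forall i, 0 < P i -> 0 < a i) /\
         h = \sum_(i : V | 0 < P i) P i * ln (a i)^-1].

Definition entropy_symmetric (R : realType) (V : finType) (e : rel V) : Prop :=
  forall P : V -> R, is_distribution P ->
    graph_entropy e P <= graph_entropy e (@uniform_distribution R V).

(* Main.v *)
Require Import Defs.
From HB Require Import structures.
From mathcomp Require Import all_boot all_order all_algebra.
From mathcomp Require Import all_classical all_reals all_analysis.
From mathcomp Require Import zify.
From Stdlib Require Import Lia.
Set Implicit Arguments. Unset Strict Implicit. Unset Printing Implicit Defensive.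


Section K.
Variables (E A B : finType) (p : E -> A) (q : E -> B) (w : nat).
Hypothesis hp : forall a, (#|[set e | p e == a]| <= w)%N.
Hypothesis hq : forall b, (#|[set e | q e == b]| <= w)%N.

Definition adj (e e' : E) : Prop := p e = p e' \/ q e = q e'.
Definition proper_on (D : {set E}) (c : E -> 'I_w) : Prop :=
  forall e e', e \in D -> e' \in D -> e != e' -> adj e e' -> c e != c e'.

Lemma uniq_col (D : {set E}) (c : E -> 'I_w) (u v : E) : proper_on D c -> u \in D -> v \in D -> adj u v -> c u = c v -> u = v.
Proof.
move=> Pc uD vD auv cuv; apply/eqP; apply/negPn/negP => nuv.
by move: (Pc u v uD vD nuv auv); rewrite cuv eqxx.
Qed.

Lemma finish (D0 : {set E}) (e0 : E) (c : E -> 'I_w) (g : 'I_w) : e0 \notin D0 -> proper_on D0 c ->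
  (forall e, e \in D0 -> p e = p e0 -> c e != g) ->
  (forall e, e \in D0 -> q e = q e0 -> c e != g) ->
  proper_on (e0 |: D0) (fun e => if e == e0 then g else c e).
Proof.
move=> e0D0 Pc ha hb e e'; rewrite !finset.in_setU1 => /orP[/eqP->|eD] /orP[/eqP->|e'D] ne.
- by rewrite eqxx in ne.
- have ne' : e' != e0 by apply: contraNneq e0D0 => <-.
  rewrite eqxx (negbTE ne') => -[h|h].
    by rewrite eq_sym; apply: ha.
  by rewrite eq_sym; apply: hb.
- have ne' : e != e0 by apply: contraNneq e0D0 => <-.
  rewrite eqxx (negbTE ne') => -[h|h]; [exact: ha | exact: hb].
- have ne1 : e != e0 by apply: contraNneq e0D0 => <-.
  have ne2 : e' != e0 by apply: contraNneq e0D0 => <-.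
  rewrite (negbTE ne1) (negbTE ne2); exact: Pc.
Qed.

Section Swap.
Variables (D0 : {set E}) (c : E -> 'I_w) (al be : 'I_w) (a0 : A) (b0 : B) (e1 : E).
Hypothesis Pc : proper_on D0 c.
Hypothesis e1D : e1 \in D0.
Hypothesis qe1 : q e1 = b0.
Hypothesis ce1 : c e1 = al.
Hypothesis nal : forall e, e \in D0 -> p e = a0 -> c e != al.
Hypothesis nbe : forall e, e \in D0 -> q e = b0 -> c e != be.

Definition next (e : E) : option E :=
  if c e == al then [pick e' in D0 | (p e' == p e) && (c e' == be)]
  else [pick e' in D0 | (q e' == q e) && (c e' == al)].

Fixpoint walk n : option E :=
  if n is n'.+1 then (if walk n' is Some e then next e else None) else Some e1.

Definition K : {set E} := [set e | `[< exists n, walk n = Some e >]].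

Lemma alnbe : al != be.
Proof. by move: (nbe e1D qe1); rewrite ce1 => /negP h; apply/negP => /eqP h'; apply: h; rewrite h'. Qed.

Lemma walk_inv n e : walk n = Some e -> e \in D0 /\ (c e = al \/ c e = be).
Proof.
elim: n e => [|n IH] e /=; first by case=> <-; split => //; left.
case: (walk n) IH => // e' /(_ e' erefl) _; rewrite /next.
case: ifP => _.
  by case: pickP => // x /andP[xD /andP[_ /eqP cx]] [<-]; split => //; right.
by case: pickP => // x /andP[xD /andP[_ /eqP cx]] [<-]; split => //; left.
Qed.

Lemma K_inv e : e \in K -> e \in D0 /\ (c e = al \/ c e = be).
Proof. by rewrite finset.in_set => /asboolP[n]; apply: walk_inv. Qed.

Lemma K_next e e' : e \in K -> next e = Some e' -> e' \in K.
Proof.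
rewrite !finset.in_set => /asboolP[n hn] hne; apply/asboolP; exists n.+1 => /=.
by rewrite hn.
Qed.

Lemma e1K : e1 \in K.
Proof. by rewrite finset.in_set; apply/asboolP; exists 0. Qed.

Lemma K_pred e : e \in K -> e != e1 -> exists2 e'', e'' \in K & next e'' = Some e.
Proof.
rewrite finset.in_set => /asboolP[[|n]] /=; first by case=> ->; rewrite eqxx.
case hn: (walk n) => [e''|] // he _; exists e'' => //.
by rewrite finset.in_set; apply/asboolP; exists n.
Qed.

Lemma next_al e e' : c e = al -> next e = Some e' ->
  [/\ e' \in D0, p e' = p e & c e' = be].
Proof.
rewrite /next => ->; rewrite eqxx.
by case: pickP => // x /andP[xD /andP[/eqP px /eqP cx]] [<-].
Qed.

Lemma next_be e e' : c e != al -> next e = Some e' ->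
  [/\ e' \in D0, q e' = q e & c e' = al].
Proof.
rewrite /next => /negbTE ->.
by case: pickP => // x /andP[xD /andP[/eqP px /eqP cx]] [<-].
Qed.

Lemma next_al_ex e e' : c e = al -> e' \in D0 -> p e' = p e -> c e' = be ->
  exists e'', next e = Some e''.
Proof.
move=> ce e'D pe ce'; rewrite /next ce eqxx.
case: pickP => [x _|h]; first by exists x.
by move: (h e'); rewrite e'D pe ce' !eqxx.
Qed.

Lemma next_be_ex e e' : c e != al -> e' \in D0 -> q e' = q e -> c e' = al ->
  exists e'', next e = Some e''.
Proof.
move=> ce e'D pe ce'; rewrite /next (negbTE ce).
case: pickP => [x _|h]; first by exists x.
by move: (h e'); rewrite e'D pe ce' !eqxx.
Qed.

Lemma K_closed e e' : e \in K -> e' \in D0 -> e' != e -> adj e e' ->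
  (c e' = al \/ c e' = be) -> e' \in K.
Proof.
move=> eK e'D ne ad ce'.
have [eD ce] := K_inv eK.
have cne : c e != c e' by apply: Pc => //; rewrite eq_sym.
have nab := alnbe.
case: ce => ce.
- have ce'b : c e' = be by case: ce' => // h; move: cne; rewrite ce h eqxx.
  case: ad => ad.
  + have [e'' hn] := next_al_ex ce e'D (esym ad) ce'b.
    have [e''D pe'' ce''] := next_al ce hn.
    have <- : e'' = e'.
      apply: (uniq_col Pc e''D e'D); first by left; rewrite pe''.
      by rewrite ce'' ce'b.
    exact: K_next hn.
  + case: (eqVneq e e1) => [ee1|ne1].
      by move: (nbe e'D); rewrite -ad ee1 qe1 ce'b eqxx => /(_ erefl).
    have [e'' e''K hn] := K_pred eK ne1.
    have [e''D ce''] := K_inv e''K.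
    case: (eqVneq (c e'') al) => ca.
      by have [_ _] := next_al ca hn; rewrite ce => h; move: nab; rewrite h eqxx.
    have [_ qe ce2] := next_be ca hn.
    have -> : e' = e''.
      apply: (uniq_col Pc e'D e''D); first by right; rewrite -ad qe.
      by rewrite ce'b; case: ce'' ca => ->; rewrite ?eqxx.
    done.
- have ce'a : c e' = al by case: ce' => // h; move: cne; rewrite ce h eqxx.
  have cna : c e != al by rewrite ce eq_sym.
  case: ad => ad.
  + have ne1 : e != e1 by apply: contraNneq cna => ->; rewrite ce1.
    have [e'' e''K hn] := K_pred eK ne1.
    have [e''D ce''] := K_inv e''K.
    case: (eqVneq (c e'') al) => ca.
      have [_ pe ce2] := next_al ca hn.
      have -> : e' = e''.
        apply: (uniq_col Pc e'D e''D); first by left; rewrite -ad pe.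
        by rewrite ce'a ca.
      done.
    by have [_ _] := next_be ca hn; rewrite ce => h; move: nab; rewrite h eqxx.
  + have [e'' hn] := next_be_ex cna e'D (esym ad) ce'a.
    have [e''D qe'' ce''] := next_be cna hn.
    have <- : e'' = e'.
      apply: (uniq_col Pc e''D e'D); first by right; rewrite qe''.
      by rewrite ce'' ce'a.
    exact: K_next hn.
Qed.

Definition sw (x : 'I_w) := if x == al then be else al.
Definition c2 e := if e \in K then sw (c e) else c e.

Lemma sw_inj x y : (x == al) || (x == be) -> (y == al) || (y == be) -> x != y -> sw x != sw y.
Proof.
have nab := alnbe; have nba : be != al by rewrite eq_sym.
have inv : forall z, (z == al) || (z == be) -> sw (sw z) = z.
  move=> z /orP[]/eqP->; rewrite /sw ?eqxx ?(negbTE nba) ?eqxx //.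
move=> hx hy; apply: contra => /eqP h; apply/eqP.
by rewrite -(inv x hx) -(inv y hy) h.
Qed.

Lemma c2_proper : proper_on D0 c2.
Proof.
have nab := alnbe.
have key : forall e e', e \in D0 -> e' \in D0 -> e != e' -> adj e e' ->
    e \in K -> e' \notin K -> sw (c e) != c e'.
  move=> e e' eD e'D ne ad eK e'K.
  have [_ ce] := K_inv eK.
  case: (boolP ((c e' == al) || (c e' == be))) => h.
    have : e' \in K.
      apply: (K_closed eK e'D) => //; first by rewrite eq_sym.
      by case/orP: h => /eqP ->; [left|right].
    by rewrite (negbTE e'K).
  apply: contraNneq h => <-; rewrite /sw; case: ifP => _; rewrite eqxx ?orbT //.
move=> e e' eD e'D ne ad; rewrite /c2.
case: (boolP (e \in K)) => eK; case: (boolP (e' \in K)) => e'K.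
- have [_ ce] := K_inv eK; have [_ ce'] := K_inv e'K.
  apply: sw_inj; first by case: ce => ->; rewrite eqxx ?orbT.
    by case: ce' => ->; rewrite eqxx ?orbT.
  exact: Pc.
- exact: key.
- rewrite eq_sym; apply: key => //; first by rewrite eq_sym.
  by case: ad => h; [left|right].
- exact: Pc.
Qed.

Lemma c2_a e : e \in D0 -> p e = a0 -> c2 e != al.
Proof.
move=> eD pe; rewrite /c2; case: ifP => eK; last exact: nal.
have [_ ce] := K_inv eK.
case: ce => ce; first by rewrite /sw ce eqxx eq_sym alnbe.
rewrite /sw ce (negbTE (_ : be != al)); last by rewrite eq_sym alnbe.
exfalso.
have ne1' : e != e1.
  apply/eqP => h; move: alnbe; rewrite -ce h ce1 eqxx //.
have [e'' e''K hn] := K_pred eK ne1'.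
have [e''D ce''] := K_inv e''K.
case: (eqVneq (c e'') al) => ca.
  have [_ pe' _] := next_al ca hn.
  by move: (nal e''D); rewrite -pe' pe ca eqxx => /(_ erefl).
have [_ _ ce2] := next_be ca hn.
by move: alnbe; rewrite -ce ce2 eqxx.
Qed.

Lemma c2_b e : e \in D0 -> q e = b0 -> c2 e != al.
Proof.
move=> eD qe; rewrite /c2; case: ifP => eK.
  have [_ ce] := K_inv eK.
  case: ce => ce; first by rewrite /sw ce eqxx eq_sym alnbe.
  by move: (nbe eD qe); rewrite ce eqxx.
apply/eqP => ce.
have : e = e1 by apply: (uniq_col Pc eD e1D); [right; rewrite qe qe1 | rewrite ce ce1].
by move=> h; move: eK; rewrite h e1K.
Qed.

End Swap.

Lemma konigD n : forall D : {set E}, #|D| = n ->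
  exists c : E -> 'I_w, proper_on D c.
Proof.
elim: n => [|n IH] D hD.
  case: (posnP w) => [w0|wpos].
    have f : E -> False.
      by move=> e; move: (hp (p e)); rewrite w0 leqn0 cards_eq0 => /eqP/finset.setP/(_ e); rewrite !inE eqxx.
    by exists (fun e => False_rect _ (f e)) => e; move: (f e).
  exists (fun _ => Ordinal wpos) => e e'; rewrite (cards0_eq hD) inE //.
have [e0 e0D] : exists e0, e0 \in D.
  by apply/set0Pn; rewrite -card_gt0 hD.
set D0 := D :\ e0.
have hD0 : #|D0| = n by move: (cardsD1 e0 D); rewrite e0D hD add1n => -[].
have [c Pc] := IH D0 hD0.
have e0D0 : e0 \notin D0 by rewrite !inE eqxx.
have DE : D = e0 |: D0 by rewrite finset.setD1K.
have miss : forall (X : {set E}) (e0' : E), e0' \in X -> e0' \notin D0 -> (#|X| <= w)%N ->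
    exists g : 'I_w, forall e, e \in D0 -> e \in X -> c e != g.
  move=> X x xX xD0 hX.
  have hlt : (#|c @: (X :&: D0)| < w)%N.
    apply: leq_ltn_trans (leq_imset_card _ _) _.
    apply: leq_trans hX; apply: proper_card; rewrite properE finset.subsetIl /=.
    by apply/subsetPn; exists x => //; rewrite inE (negbTE xD0) andbF.
  have : ~~ ([set: 'I_w] \subset c @: (X :&: D0)).
    by apply/negP => /subset_leq_card; rewrite cardsT card_ord leqNgt hlt.
  case/subsetPn => g _ hg; exists g => e eD eX.
  by apply: contraNneq hg => <-; apply: imset_f; rewrite inE eX.
have e0a : e0 \in [set e | p e == p e0] by rewrite inE.
have e0b : e0 \in [set e | q e == q e0] by rewrite inE.
have [al hal] := miss [set e | p e == p e0] e0 e0a e0D0 (hp _).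
have [be hbe] := miss [set e | q e == q e0] e0 e0b e0D0 (hq _).
have hal' : forall e, e \in D0 -> p e = p e0 -> c e != al.
  by move=> e eD pe; apply: hal => //; rewrite inE pe.
have hbe' : forall e, e \in D0 -> q e = q e0 -> c e != be.
  by move=> e eD pe; apply: hbe => //; rewrite inE pe.
rewrite DE.
case: (boolP [exists e in D0, (q e == q e0) && (c e == al)]).
  case/exists_inP => e1 e1D /andP[/eqP qe1 /eqP ce1].
  exists (fun e => if e == e0 then al else c2 D0 c al be e1 e).
  apply: finish => //.
  - exact: (c2_proper Pc e1D qe1 ce1 hbe').
  - by move=> e eD pe; apply: (c2_a e1D qe1 ce1 hal' hbe').
  - by move=> e eD qe; apply: (c2_b Pc e1D qe1 ce1 hbe').
move=> hn; exists (fun e => if e == e0 then al else c e).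
apply: finish => // e eD qe; apply/negP => /eqP ce.
by move/negP: hn; apply; apply/exists_inP; exists e => //; rewrite qe ce !eqxx.
Qed.

Lemma konig : exists c : E -> 'I_w, forall e e', e != e' -> adj e e' -> c e != c e'.
Proof.
have [c Pc] := konigD (erefl #|[set: E]|).
by exists c => e e' ne ad; apply: Pc; rewrite ?inE.
Qed.

End K.


Lemma card3_le (A : finType) (a b c : A) : (#|[set a; b; c]| <= 3)%N.
Proof.
apply: leq_trans (leq_card_setU _ _) _; rewrite cards1 cardsU1 cards1.
by case: (_ \notin _).
Qed.

Section Str.
Variables (V : finType) (e : rel V) (T : finType) (f : V -> {set T}).
Hypothesis esym : symmetric e.
Hypothesis eirr : irreflexive e.
Hypothesis fP : forall v, exists x y, x != y /\ f v = [set x; y].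
Hypothesis finj : injective f.
Hypothesis fadj : forall u v, u != v -> (e u v <-> f u :&: f v != finset.set0).

Definition star (x : T) : {set V} := [set v | x \in f v].
Notation w := (clique_number e).

Lemma clique_le C : is_clique e C -> (#|C| <= w)%N.
Proof. by move=> hC; rewrite /clique_number; apply: (leq_bigmax_cond C hC). Qed.

Lemma star_clique x : is_clique e (star x).
Proof.
apply/forall_inP => u; rewrite inE => ux; apply/forall_inP => v; rewrite inE => vx.
apply/implyP => nuv; apply/(fadj nuv)/set0Pn; exists x; by rewrite inE ux vx.
Qed.

Lemma star_le x : (#|star x| <= w)%N.
Proof. exact/clique_le/star_clique. Qed.

Lemma other v a : a \in f v -> exists b, b != a /\ f v = [set a; b].
Proof.
have [x [y [nxy ->]]] := fP v; rewrite !inE => /orP[]/eqP->.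
  by exists y; rewrite eq_sym.
by exists x; split => //; rewrite finset.setUC.
Qed.

Lemma card_f v : #|f v| = 2.
Proof. by have [x [y [nxy ->]]] := fP v; rewrite cards2 nxy. Qed.

Lemma pair_eq v a b : a != b -> a \in f v -> b \in f v -> f v = [set a; b].
Proof.
move=> nab av bv; apply/eqP; rewrite eq_sym finset.eqEcard card_f cards2 nab andbT.
by apply/fintype.subsetP => z; rewrite !inE => /orP[]/eqP->.
Qed.

Lemma same_f u u' a b : a != b -> a \in f u -> b \in f u -> f u' = [set a; b] -> u = u'.
Proof. by move=> nab au bu fu'; apply: finj; rewrite fu'; apply: pair_eq. Qed.

Lemma adj_meet u v : u != v -> e u v -> exists2 s, s \in f u & s \in f v.
Proof.
by move=> nuv /(fadj nuv)/set0Pn[s]; rewrite inE => /andP[]; exists s.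
Qed.

Lemma clique_adj C u v : is_clique e C -> u \in C -> v \in C -> u != v -> e u v.
Proof.
by move=> /forall_inP/(_ u)hC uC vC nuv; move: (hC uC) => /forall_inP/(_ v vC)/implyP; apply.
Qed.

Lemma tri C u1 x y : is_clique e C -> u1 \in C -> x != y -> f u1 = [set x; y] ->
  C \subset star x \/ C \subset star y \/
  exists u2 u3 z, [/\ u2 \in C, u3 \in C, f u2 = [set y; z], f u3 = [set x; z] &
     [&& z != x, z != y & C \subset [set u1; u2; u3]]].
Proof.
move=> hC u1C nxy fu1.
case: (boolP (C \subset star x)) => hx; first by left.
case: (boolP (C \subset star y)) => hy; first by right; left.
right; right.
case/subsetPn: hx => u2 u2C; rewrite inE => xu2.
case/subsetPn: hy => u3 u3C; rewrite inE => yu3.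
have xu1 : x \in f u1 by rewrite fu1 !inE eqxx.
have yu1 : y \in f u1 by rewrite fu1 !inE eqxx orbT.
have n12 : u1 != u2 by apply: contraNneq xu2 => <-.
have n13 : u1 != u3 by apply: contraNneq yu3 => <-.
have [s su1 su2] := adj_meet n12 (clique_adj hC u1C u2C n12).
have yu2 : y \in f u2.
  by move: su1; rewrite fu1 !inE => /orP[]/eqP hs; [move: su2; rewrite hs (negbTE xu2) | rewrite -hs].
have [s' su1' su3] := adj_meet n13 (clique_adj hC u1C u3C n13).
have xu3 : x \in f u3.
  by move: su1'; rewrite fu1 !inE => /orP[]/eqP hs; [rewrite -hs | move: su3; rewrite hs (negbTE yu3)].
have [z [nzy fu2]] := other yu2.
have [z' [nzx fu3]] := other xu3.
have nzx' : z != x by apply: contraNneq xu2 => <-; rewrite fu2 !inE eqxx orbT.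
have nzy' : z' != y by apply: contraNneq yu3 => <-; rewrite fu3 !inE eqxx orbT.
have n23 : u2 != u3 by apply: contraNneq xu2 => ->.
have [s2 s2u2 s2u3] := adj_meet n23 (clique_adj hC u2C u3C n23).
have zz : z = z'.
  move: s2u2 s2u3; rewrite fu2 fu3 !inE => /orP[]/eqP-> /orP[]/eqP h.
  - by move: nxy; rewrite h eqxx.
  - by move: nzy'; rewrite h eqxx.
  - by move: nzx'; rewrite h eqxx.
  - done.
subst z'.
exists u2, u3, z; split => //; rewrite nzx' nzy /=.
apply/fintype.subsetP => u uC.
rewrite !inE.
case: (eqVneq u u1) => [_|n1] //=.
case: (eqVneq u u2) => [_|n2] //=; rewrite ?orbT //.
case: (eqVneq u u3) => [_|n3] //=; rewrite ?orbT //.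
exfalso.
have [a1 a1u a1v] := adj_meet n1 (clique_adj hC uC u1C n1).
have [a2 a2u a2v] := adj_meet n2 (clique_adj hC uC u2C n2).
have [a3 a3u a3v] := adj_meet n3 (clique_adj hC uC u3C n3).
move: a1v a2v a3v; rewrite fu1 fu2 fu3 !inE.
have nxz : x != z by rewrite eq_sym.
have nyz : y != z by rewrite eq_sym.
move=> /orP[]/eqP ea1 /orP[]/eqP ea2 /orP[]/eqP ea3; subst a1 a2 a3.
all: first [ apply: (negP n1); apply/eqP; apply: (same_f _ _ _ fu1); done
           | apply: (negP n2); apply/eqP; apply: (same_f _ _ _ fu2); done
           | apply: (negP n3); apply/eqP; apply: (same_f _ _ _ fu3); done ].
Qed.


Variables (Q : {set {set V}}) (k : nat) (v0 : V).
Hypothesis hQ : finset.partition Q [set: V].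
Hypothesis hQC : forall C, C \in Q -> is_clique e C /\ #|C| = w.
Hypothesis reg : forall v, #|nbhd e v| = k.
Hypothesis k4 : (3 < k)%N.

Lemma covQ v : v \in finset.cover Q.
Proof. by case/and3P: hQ => /eqP-> _ _; rewrite inE. Qed.
Lemma trivQ : finset.trivIset Q.
Proof. by case/and3P: hQ. Qed.

Definition blk v := finset.pblock Q v.
Lemma blk_in v : v \in blk v.
Proof. by rewrite /blk finset.mem_pblock covQ. Qed.
Lemma blkQ v : blk v \in Q.
Proof. exact/finset.pblock_mem/covQ. Qed.
Lemma blk_clique v : is_clique e (blk v).
Proof. by have [] := hQC (blkQ v). Qed.
Lemma card_blk v : #|blk v| = w.
Proof. by have [] := hQC (blkQ v). Qed.
Lemma blk_eq u v : u \in blk v -> blk u = blk v.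
Proof. by move=> h; apply: finset.same_pblock => //; exact: trivQ. Qed.
Lemma blk_disj u v : blk u != blk v -> [disjoint blk u & blk v].
Proof. by move=> h; move/finset.trivIsetP: trivQ; apply => //; apply: blkQ. Qed.

Lemma deg v a b : f v = [set a; b] -> (k <= (#|star a|).-1 + (#|star b|).-1)%N.
Proof.
move=> fv; rewrite -(reg v).
have sa : v \in star a by rewrite inE fv !inE eqxx.
have sb : v \in star b by rewrite inE fv !inE eqxx orbT.
have -> : (#|star a|).-1 = #|star a :\ v| by rewrite (cardsD1 v (star a)) sa.
have -> : (#|star b|).-1 = #|star b :\ v| by rewrite (cardsD1 v (star b)) sb.
apply: leq_trans (leq_card_setU _ _); apply: subset_leq_card.
apply/fintype.subsetP => u; rewrite !inE => euv.
have nvu : v != u by apply: contraTneq euv => ->; rewrite eirr.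
have [s sv su] := adj_meet nvu euv.
rewrite eq_sym nvu /=; move: sv; rewrite fv !inE => /orP[]/eqP <-; rewrite su ?orbT //.
Qed.


Lemma w_ge3 : (3 <= w)%N.
Proof.
have [a [b [nab fv]]] := fP v0.
have := deg fv; have := star_le a; have := star_le b.
move: k4; clear; lia.
Qed.

Definition W v := [exists x, blk v \subset star x].

Lemma W_all v : (4 <= w)%N -> W v.
Proof.
move=> w4; have [a [b [nab fv]]] := fP v.
case: (tri (blk_clique v) (blk_in v) nab fv) => [h|[h|[u2 [u3 [z [_ _ _ _ /and3P[_ _ hs]]]]]]].
- by apply/existsP; exists a.
- by apply/existsP; exists b.
- have := subset_leq_card hs; rewrite card_blk.
  have := card3_le v u2 u3; move: w4; clear; lia.
Qed.

Lemma nonW_w3 v : ~~ W v -> w = 3.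
Proof.
move=> nW; have := w_ge3; case: (leqP 4 w) => h; first by rewrite W_all in nW.
by move: h; clear; lia.
Qed.

Definition center v : option T := [pick x | blk v \subset star x].
Definition yv v : option T := [pick y in f v | Some y != center v].

Lemma W_center v : W v -> exists x, [/\ center v = Some x, star x = blk v & x \in f v].
Proof.
rewrite /W /center; case: pickP => [x hx _ | h /existsP[x]]; last by rewrite h.
exists x; split => //.
  apply/eqP; rewrite eq_sym finset.eqEcard hx card_blk star_le //.
by move/fintype.subsetP: hx => /(_ v (blk_in v)); rewrite inE.
Qed.

Lemma W_y v : W v -> exists x y, [/\ center v = Some x, yv v = Some y, star x = blk v,
  x != y & f v = [set x; y]].
Proof.
move=> Wv; have [x [cx sx xf]] := W_center Wv.
have [y [nyx fv]] := other xf.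
exists x, y; split => //; last by rewrite eq_sym.
rewrite /yv; case: pickP => [y' /andP[y'f]|h].
  rewrite cx => ny'x; congr Some; move: y'f; rewrite fv !inE => /orP[]/eqP // eqx.
  by move: ny'x; rewrite eqx eqxx.
by move: (h y); rewrite fv !inE eqxx orbT cx /= (inj_eq (@Some_inj _)) nyx.
Qed.

Definition node (o : option T) : {set V} + option T :=
  if o is Some y then
    (if [pick u in star y | ~~ W u] is Some u then inl (blk u) else inr (Some y))
  else inr None.
Definition pp v : {set V} + V := if W v then inl (blk v) else inr v.
Definition qq v : ({set V} + option T) + V := if W v then inl (node (yv v)) else inr v.

Lemma W_star_blk u x : W u -> center u = Some x -> x \in f u.
Proof. by move=> Wu cu; have [x' [cx' _ xf]] := W_center Wu; move: cu; rewrite cx' => -[<-]. Qed.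

Lemma WW_adj u v : W u -> W v -> u != v -> e u v -> pp u = pp v \/ qq u = qq v.
Proof.
move=> Wu Wv nuv euv; rewrite /pp /qq Wu Wv.
have [xu [yu [cu yvu su nu fu]]] := W_y Wu.
have [xv [yv' [cv yvv sv nv fv]]] := W_y Wv.
have [s s1 s2] := adj_meet nuv euv.
move: s1 s2; rewrite fu fv !inE => /orP[]/eqP-> .
- move=> h; left; congr inl; rewrite (blk_eq (_ : v \in blk u)) // -su inE fv !inE; exact: h.
- move=> /orP[]/eqP h.
  + left; congr inl; apply: blk_eq; rewrite -sv inE fu h !inE eqxx orbT //.
  + by right; rewrite yvu yvv h.
Qed.

Lemma W_blk u t : u \in blk t -> W u = W t.
Proof. by move=> h; rewrite /W (blk_eq h). Qed.

Lemma tri_nonW t : ~~ W t -> exists t2 t3 x y z,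
  [/\ f t = [set x; y], f t2 = [set y; z], f t3 = [set x; z] &
   [&& x != y, z != x, z != y, t2 \in blk t, t3 \in blk t & blk t \subset [set t; t2; t3]]].
Proof.
move=> nW; have [x [y [nxy ft]]] := fP t.
case: (tri (blk_clique t) (blk_in t) nxy ft) => [h|[h|[u2 [u3 [z [? ? ? ? /and3P[? ? ?]]]]]]].
- by move: nW; rewrite /W; case/existsP; exists x.
- by move: nW; rewrite /W; case/existsP; exists y.
- by exists u2, u3, x, y, z; split => //; apply/and5P; split => //; apply/andP.
Qed.

Lemma S2 t a : ~~ W t -> a \in f t -> exists2 t', t' \in blk t & (t' != t) && (a \in f t').
Proof.
move=> nW; have [t2 [t3 [x [y [z [ft f2 f3 /and5P[nxy nzx nzy t2b /andP[t3b _]]]]]]]] := tri_nonW nW.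
rewrite ft !inE => /orP[]/eqP->.
- exists t3 => //; rewrite f3 !inE eqxx andbT; apply/eqP => e3.
  by move: ft; rewrite -e3 f3 => /finset.setP/(_ z); rewrite !inE eqxx /= (negbTE nzx) (negbTE nzy).
- exists t2 => //; rewrite f2 !inE eqxx andbT; apply/eqP => e2.
  by move: ft; rewrite -e2 f2 => /finset.setP/(_ z); rewrite !inE eqxx orbT /= (negbTE nzx) (negbTE nzy).
Qed.

Lemma S2c t a : ~~ W t -> a \in f t -> (2 <= #|star a :&: blk t|)%N.
Proof.
move=> nW af; have [t' t'b /andP[nt' at']] := S2 nW af.
apply/card_gt1P; exists t', t; rewrite !inE af at' t'b blk_in; split => //.
Qed.

Lemma S2u t a : ~~ W t -> (#|star a :&: blk t| <= 2)%N.
Proof.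
move=> nW; have w3 := nonW_w3 nW.
have : star a :&: blk t \proper blk t.
  rewrite finset.properEneq finset.subsetIr andbT; apply: contraNneq nW => h.
  by apply/existsP; exists a; rewrite -h finset.subsetIl.
by move/proper_card; rewrite card_blk w3.
Qed.

Lemma tri_pts t : ~~ W t -> exists x y z, forall u, u \in blk t -> f u \subset [set x; y; z].
Proof.
move=> nW; have [t2 [t3 [x [y [z [ft f2 f3 /and5P[_ _ _ _ /andP[_ hs]]]]]]]] := tri_nonW nW.
exists x, y, z => u /(fintype.subsetP hs); rewrite !inE => /orP[/orP[]|]/eqP->;
  rewrite ?ft ?f2 ?f3; apply/fintype.subsetP => s; rewrite !inE => /orP[]/eqP->; by rewrite eqxx ?orbT.
Qed.

Lemma S_same u u' a : ~~ W u -> ~~ W u' -> a \in f u -> a \in f u' -> blk u = blk u'.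
Proof.
move=> nW nW' au au'; apply/eqP; apply: contraT => nb.
have dj := blk_disj nb.
have h1 := S2c nW au; have h2 := S2c nW' au'.
have : (#|(star a :&: blk u) :|: (star a :&: blk u')| <= w)%N.
  by apply: leq_trans (star_le a); apply: subset_leq_card; rewrite finset.subUset !finset.subsetIl.
rewrite cardsU.
have -> : (star a :&: blk u) :&: (star a :&: blk u') = finset.set0.
  apply/eqP; rewrite -finset.subset0 -(disjoint_setI0 dj); apply/fintype.subsetP => v.
  by rewrite !inE => /andP[/andP[_ ->] /andP[_ ->]].
rewrite cards0 subn0 (nonW_w3 nW); move: h1 h2; clear; lia.
Qed.

Lemma star3 t a : ~~ W t -> a \in f t -> #|star a| = 3.
Proof.
move=> nW af; have w3 := nonW_w3 nW.
have [b [nba ft]] := other af.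
have := deg ft; have := star_le a; have := star_le b; rewrite w3.
move: k4; clear; lia.
Qed.

Lemma S3 t a : ~~ W t -> a \in f t ->
  exists g, [/\ W g, a \in f g, yv g = Some a & qq g = inl (inl (blk t))].
Proof.
move=> nW af.
have : ~~ (star a \subset blk t).
  apply/negP => /finset.setIidPl h; have := S2u a nW; rewrite h (star3 nW af) //.
case/subsetPn => g; rewrite inE => ag gnb.
have Wg : W g.
  case: (boolP (W g)) => // nWg; move: gnb; rewrite -(S_same nWg nW ag af) blk_in //.
have [x0 [y0 [cg yg sg nxy fg]]] := W_y Wg.
have ay : a = y0.
  move: ag; rewrite fg !inE => /orP[]/eqP // ax.
  have : t \in blk g by rewrite -sg inE -ax.
  by move/blk_eq => bt; move: gnb; rewrite bt blk_in.
subst y0; exists g; split => //.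
rewrite /qq Wg yg /=; case: pickP => [u /andP[ua nWu]|h].
  by rewrite (S_same nWu nW _ af) //; move: ua; rewrite inE.
by move: (h t); rewrite inE af nW.
Qed.

Lemma node_inl y B : node (Some y) = inl B -> exists u, [/\ u \in star y, ~~ W u & blk u = B].
Proof.
rewrite /node; case: pickP => // u /andP[uy nWu] [<-]; by exists u.
Qed.

Lemma node_cases y : (exists B, node (Some y) = inl B) \/ node (Some y) = inr (Some y).
Proof. rewrite /node; case: pickP => [u _|_]; [left; eexists; reflexivity | by right]. Qed.

Lemma W_star_uniq a u v v' : ~~ W u -> a \in f u -> W v -> W v' ->
  a \in f v -> a \in f v' -> v = v'.
Proof.
move=> nWu au Wv Wv' av av'; apply/eqP; apply: contraT => nvv.
have w3 := nonW_w3 nWu.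
have h2 := S2c nWu au.
have : (#|[set v; v'] :|: (star a :&: blk u)| <= w)%N.
  apply: leq_trans (star_le a); apply: subset_leq_card; rewrite finset.subUset finset.subsetIl andbT.
  by apply/fintype.subsetP => z; rewrite !inE => /orP[]/eqP->.
rewrite cardsU cards2 nvv.
have -> : [set v; v'] :&: (star a :&: blk u) = finset.set0.
  apply/eqP; rewrite -finset.subset0; apply/fintype.subsetP => z; rewrite !inE => /andP[/orP[]/eqP-> /andP[_ zb]].
  + by move: nWu; rewrite -(W_blk zb) Wv.
  + by move: nWu; rewrite -(W_blk zb) Wv'.
rewrite cards0 subn0 w3; move: h2; clear; lia.
Qed.

Lemma hpp a : (#|[set v | pp v == a]| <= w)%N.
Proof.
case: (set_0Vmem [set v | pp v == a]) => [->|[v1]]; first by rewrite cards0.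
rewrite inE /pp; case: ifP => Wv1 /eqP ea; subst a.
  apply: leq_trans (_ : #|blk v1| <= w)%N; last by rewrite card_blk.
  apply: subset_leq_card; apply/fintype.subsetP => v; rewrite inE /pp.
  by case: ifP => // _ /eqP [<-]; apply: blk_in.
apply: leq_trans (_ : 1 <= w)%N; last by have := w_ge3; clear; lia.
rewrite -(cards1 v1); apply: subset_leq_card; apply/fintype.subsetP => v; rewrite !inE /pp.
by case: ifP => // _ /eqP [->].
Qed.

Lemma hqq b : (#|[set v | qq v == b]| <= w)%N.
Proof.
case: (set_0Vmem [set v | qq v == b]) => [->|[v1]]; first by rewrite cards0.
rewrite inE /qq; case: ifP => Wv1 /eqP ea; subst b; last first.
  apply: leq_trans (_ : 1 <= w)%N; last by have := w_ge3; clear; lia.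
  rewrite -(cards1 v1); apply: subset_leq_card; apply/fintype.subsetP => v; rewrite !inE /qq.
  by case: ifP => // _ /eqP [->].
have [x1 [y1 [_ yv1 _ _ _]]] := W_y Wv1; rewrite yv1.
case: (node_cases y1) => [[B hB]|hn]; rewrite ?hB ?hn.
- have [u1 [u1y nWu1 bu1]] := node_inl hB.
  have [x [y [z hpts]]] := tri_pts nWu1.
  set S := [set v | qq v == _].
  have hS : forall v, v \in S -> exists a, [/\ W v, yv v = Some a, a \in f v &
       exists2 u, (u \in star a) && ~~ W u & u \in blk u1].
    move=> v; rewrite inE /qq; case: ifP => // Wv /eqP [].
    have [xv [a [_ yva _ _ fv]]] := W_y Wv; rewrite yva => /node_inl[u [ua nWu bu]].
    exists a; split => //; first by rewrite fv !inE eqxx orbT.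
    by exists u; [rewrite ua nWu | rewrite bu1 -bu blk_in].
  rewrite -(card_in_imset (f := yv)); last first.
    move=> v v' /hS[a [Wv ya av [u /andP[ua nWu] _]]] /hS[a' [Wv' ya' av' _]].
    rewrite ya ya' => -[ea]; subst a'.
    have au : a \in f u by move: ua; rewrite inE.
    exact: (W_star_uniq nWu au Wv Wv' av av').
  rewrite (nonW_w3 nWu1); apply: leq_trans _ (card3_le (Some x) (Some y) (Some z)).
  apply: subset_leq_card; apply/fintype.subsetP => o /imsetP[v /hS[a [Wv ya av [u /andP[ua nWu] ub]]] ->].
  rewrite ya; move: ua; rewrite inE => /(fintype.subsetP (hpts u ub)).
  by rewrite !inE => /orP[/orP[]|]/eqP->; rewrite eqxx ?orbT.
- apply: leq_trans (star_le y1); apply: subset_leq_card; apply/fintype.subsetP => v.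
  rewrite !inE /qq; case: ifP => // Wv /eqP [].
  have [xv [a [_ yva _ _ fv]]] := W_y Wv; rewrite yva.
  case: (node_cases a) => [[B ->]|->] // [<-]; rewrite fv !inE eqxx orbT //.
Qed.

Lemma meet_adj u v s : u != v -> s \in f u -> s \in f v -> e u v.
Proof. by move=> nuv su sv; apply/(fadj nuv)/set0Pn; exists s; rewrite inE su sv. Qed.

Lemma card3_eq (A : finType) (a b c : A) : a != b -> a != c -> b != c -> #|[set a; b; c]| = 3.
Proof.
move=> nab nac nbc; rewrite -finset.setUA cardsU1 cards2 nbc !inE negb_or nab nac //.
Qed.

Variable c : V -> 'I_w.
Hypothesis cP : forall u v, u != v -> (pp u = pp v \/ qq u = qq v) -> c u != c v.

Definition col v := if W v then c v
  else odflt (c v) [pick j | [forall u, (W u && e v u) ==> (c u != j)]].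

Lemma free t : ~~ W t -> exists j, forall u, W u -> e t u -> c u != j.
Proof.
move=> nW; have w3 := nonW_w3 nW.
have [a [b [nab ft]]] := fP t.
have aft : a \in f t by rewrite ft !inE eqxx.
have bft : b \in f t by rewrite ft !inE eqxx orbT.
have [ga [Wa aga _ _]] := S3 nW aft.
have [gb [Wb bgb _ _]] := S3 nW bft.
set N := [set u | W u && e t u].
have hN : N \subset [set ga; gb].
  apply/fintype.subsetP => u; rewrite !inE => /andP[Wu etu].
  have ntu : t != u by apply: contraNneq nW => ->.
  have [s st su] := adj_meet ntu etu.
  move: st; rewrite ft !inE => /orP[]/eqP hs; subst s.
  - by rewrite (W_star_uniq nW aft Wu Wa su aga) eqxx.
  - by rewrite (W_star_uniq nW bft Wu Wb su bgb) eqxx orbT.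
have : (#|c @: N| < #|[set: 'I_w]|)%N.
  rewrite cardsT card_ord; apply: leq_ltn_trans (leq_imset_card _ _) _.
  by apply: leq_ltn_trans (subset_leq_card hN) _; rewrite cards2 w3; case: (_ != _).
move=> hlt; have : ~~ ([set: 'I_w] \subset c @: N).
  by apply/negP => /subset_leq_card; rewrite leqNgt hlt.
case/subsetPn => j _ hj; exists j => u Wu etu.
by apply: contraNneq hj => <-; apply: imset_f; rewrite inE Wu etu.
Qed.

Lemma col_nonW t : ~~ W t -> forall u, W u -> e t u -> c u != col t.
Proof.
move=> nW; rewrite /col (negbTE nW); case: pickP => [j /forallP hj | hn] /= u Wu etu.
  by have := hj u; rewrite Wu etu.
exfalso; have [j hj] := free nW; move: (hn j) => /negbT/negP; apply.
by apply/forallP => u'; apply/implyP => /andP[Wu' e']; apply: hj.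
Qed.

Lemma col_proper u v : e u v -> col u != col v.
Proof.
move=> euv.
have nuv : u != v by apply: contraTneq euv => ->; rewrite eirr.
case: (boolP (W u)) => Wu; case: (boolP (W v)) => Wv.
- by rewrite /col Wu Wv; apply: cP => //; apply: WW_adj.
- by rewrite {1}/col Wu; apply: col_nonW => //; rewrite esym.
- by rewrite eq_sym {1}/col Wv; apply: col_nonW.
have [s su sv] := adj_meet nuv euv.
have bb := S_same Wu Wv su sv.
have [p1 [nps fu]] := other su.
have : ~~ (f v \subset f u).
  apply/negP => hs; move: nuv; rewrite (finj (_ : f v = f u)) ?eqxx //.
  by apply/eqP; rewrite finset.eqEcard hs !card_f.
case/subsetPn => p3 p3v p3u.
have sfu : s \in f u by rewrite fu !inE eqxx.
have p1u : p1 \in f u by rewrite fu !inE eqxx orbT.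
have [g1 [W1 s1 y1 q1]] := S3 Wu sfu.
have [g2 [W2 s2 y2 q2]] := S3 Wu p1u.
have [g3 [W3 s3 y3 q3]] := S3 Wv p3v.
have n12 : g1 != g2.
  by apply/eqP => h; move: y1; rewrite h y2 => -[] e12; move: nps; rewrite e12 eqxx.
have n13 : g1 != g3.
  by apply/eqP => h; move: y1; rewrite h y3 => -[] ee; move: p3u; rewrite ee sfu.
have n23 : g2 != g3.
  by apply/eqP => h; move: y2; rewrite h y3 => -[] ee; move: p3u; rewrite ee p1u.
have c12 : c g1 != c g2 by apply: cP => //; right; rewrite q1 q2.
have c13 : c g1 != c g3 by apply: cP => //; right; rewrite q1 q3 bb.
have c23 : c g2 != c g3 by apply: cP => //; right; rewrite q2 q3 bb.
have nug1 : u != g1 by apply: contraNneq Wu => ->.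
have nug2 : u != g2 by apply: contraNneq Wu => ->.
have nvg3 : v != g3 by apply: contraNneq Wv => ->.
have h1 := col_nonW Wu W1 (meet_adj nug1 sfu s1).
have h2 := col_nonW Wu W2 (meet_adj nug2 p1u s2).
have h3 := col_nonW Wv W3 (meet_adj nvg3 p3v s3).
apply/eqP => hc.
have : [set c g1; c g2; c g3] = [set: 'I_w].
  apply/eqP; rewrite finset.eqEcard finset.subsetT cardsT card_ord card3_eq //.
  by rewrite (nonW_w3 Wu).
move/setP/(_ (col u)); rewrite !inE.
by rewrite eq_sym (negbTE h1) eq_sym (negbTE h2) hc eq_sym (negbTE h3).
Qed.
End Str.


Section Ent.
Import Order.TTheory GRing.Theory Num.Theory.
Local Open Scope ring_scope.
Variables (R : realType) (V : finType) (e : rel V) (w : nat).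
Variable col : V -> 'I_w.
Hypothesis colP : forall u v, e u v -> col u != col v.
Hypothesis wpos : (0 < w)%N.

Definition cls (j : 'I_w) : {set V} := [set v | col v == j].
Definition lamc (S : {set V}) : R := \sum_(j < w) (S == cls j)%:R / w%:R.

Lemma cls_indep j : is_independent e (cls j).
Proof.
apply/forall_inP => x; rewrite inE => /eqP hx; apply/forall_inP => y; rewrite inE => /eqP hy.
by apply/negP => /colP; rewrite hx hy eqxx.
Qed.

Lemma VP_col : VP e (fun _ => (w%:R : R)^-1).
Proof.
have w0 : (w%:R : R) != 0 by rewrite pnatr_eq0 -lt0n.
exists lamc; split.
- by move=> S; apply: sumr_ge0 => j _; apply: divr_ge0.
- move=> S hS; apply: big1 => j _.
  case: eqP => [hj|]; last by rewrite mul0r.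
  by move: hS; rewrite hj cls_indep.
- rewrite /lamc exchange_big /=.
  rewrite (eq_bigr (fun _ => (w%:R)^-1)); last first.
    move=> j _; rewrite -big_distrl /= (bigD1 (cls j)) //= eqxx big1 ?addr0 ?mul1r //.
    by move=> S /negbTE ->.
  by rewrite sumr_const card_ord -[_ *+ _]mulr_natl mulfV.
- move=> i; rewrite /lamc.
  under eq_bigr do rewrite big_distrl /=.
  rewrite exchange_big /= (bigD1 (col i)) //=.
  rewrite [X in _ + X]big1 ?addr0.
    rewrite (bigD1 (cls (col i))) //= [X in _ + X]big1 ?addr0.
      by rewrite eqxx /charvec inE eqxx !mul1r mulr1.
    by move=> S /negbTE ->; rewrite !mul0r.
  move=> j hj; apply: big1 => S _; case: eqP => [->|]; last by rewrite !mul0r.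
  by rewrite /charvec inE eq_sym (negbTE hj) mulr0.
Qed.

Lemma VP_le1 (a : V -> R) i : VP e a -> a i <= 1.
Proof.
case=> lam [l0 _ l1 ->]; rewrite -l1; apply: ler_sum => S _ /=.
by rewrite /charvec; case: ifP; rewrite ?mulr1 ?mulr0.
Qed.

Lemma VP_clique (a : V -> R) (C : {set V}) : VP e a -> is_clique e C -> \sum_(i in C) a i <= 1.
Proof.
case=> lam [l0 lind l1 ha] hC; under eq_bigr do rewrite ha.
rewrite exchange_big /= -l1; apply: ler_sum => S _.
rewrite -big_distrr /=.
case: (boolP (is_independent e S)) => hS; last by rewrite lind ?mul0r.
rewrite -[leRHS]mulr1; apply: ler_wpM2l => //.
have -> : \sum_(i in C) charvec R S i = #|S :&: C|%:R.
  rewrite /charvec -big_mkcondr /= sumr_const; congr (_ *+ _).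
  by apply: eq_card => i; rewrite !inE andbC.
suff h : (#|S :&: C| <= 1)%N by rewrite -(ler_nat R) in h.
rewrite leqNgt; apply/negP => /card_gt1P[x [y [xS yS nxy]]].
move: xS yS; rewrite !inE => /andP[xS xC] /andP[yS yC].
move: hC => /forall_inP/(_ x xC)/forall_inP/(_ y yC); rewrite nxy /= => exy.
by move: hS => /forall_inP/(_ x xS)/forall_inP/(_ y yS); rewrite exy.
Qed.

Definition Eset (P : V -> R) : set R := [set h : R | exists a, VP e a /\ (forall i, 0 < P i -> 0 < a i) /\
         h = \sum_(i : V | 0 < P i) P i * ln (a i)^-1].

Lemma Eset_lb P : has_lbound (Eset P).
Proof.
exists 0 => h [a [ha [hp ->]]]; apply: sumr_ge0 => i hi.
apply: mulr_ge0; first exact: ltW.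
by apply: ln_ge0; rewrite invf_ge1 ?hp //; apply: VP_le1 ha.
Qed.

Lemma w0 : 0 < (w%:R : R).
Proof. by rewrite ltr0n. Qed.

Lemma Eset_col P : Eset P (\sum_(i : V | 0 < P i) P i * ln w%:R).
Proof.
exists (fun _ => (w%:R)^-1); split; first exact: VP_col.
split; first by move=> i _; rewrite invr_gt0 w0.
by rewrite invrK.
Qed.

Lemma ent_upper (P : V -> R) : is_distribution P -> graph_entropy e P <= ln w%:R.
Proof.
case=> P0 P1; rewrite /graph_entropy.
apply: le_trans (ge_inf (Eset_lb P) (Eset_col P)) _.
rewrite -big_distrl /= -[leRHS]mul1r; apply: ler_wpM2r.
  by apply: ln_ge0; rewrite ler1n.
rewrite -P1 [leRHS](bigID (fun i => 0 < P i)) /= lerDl; apply: sumr_ge0 => i _; exact: P0.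
Qed.

Lemma ent_lower (Q : {set {set V}}) : finset.partition Q [set: V] ->
  (forall C, C \in Q -> is_clique e C /\ #|C| = w) -> (0 < #|V|)%N ->
  ln w%:R <= graph_entropy e (@uniform_distribution R V).
Proof.
move=> hQ hC n0; rewrite /graph_entropy.
have np : 0 < (#|V|%:R : R)^-1 by rewrite invr_gt0 ltr0n.
apply: lb_le_inf; first by eexists; exact: Eset_col.
move=> h [a [ha [hp ->]]].
rewrite /uniform_distribution.
have hp' : forall i, 0 < a i by move=> i; apply: hp.
rewrite (eq_bigl predT) ?np // -big_distrr /=.
rewrite ler_pdivlMl ?ltr0n // mulr_natl -sumr_const -subr_ge0 -sumrB /=.
rewrite -oppr_le0 -sumrN.
apply: (@le_trans _ _ (\sum_i (w%:R * a i - 1))).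
  apply: ler_sum => i _; rewrite lnV ?posrE ?hp' // opprD opprK addrC.
  rewrite opprK -lnM ?posrE ?hp' ?w0 //.
  have hl := @le_ln1Dx R (w%:R * a i - 1); rewrite subrKC in hl; apply: hl.
  by rewrite ltrBrDl subrr mulr_gt0 ?w0 ?hp'.
case/and3P: hQ => /eqP cov triv _.
have -> : \sum_i (w%:R * a i - 1) = \sum_(i in finset.cover Q) (w%:R * a i - 1).
  by apply: eq_bigl => i; rewrite cov inE.
rewrite finset.big_trivIset //; apply: sumr_le0 => C CQ.
have [cC cardC] := hC C CQ.
rewrite sumrB sumr_const -big_distrr /= cardC subr_le0.
rewrite -[leRHS]mulr1 -mulr_natr mul1r; apply: ler_wpM2l; first exact: ltW w0.
exact: VP_clique ha cC.
Qed.
End Ent.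

Theorem mainTheorem4 (R : realType) (V : finType) (e : rel V) (k : nat) :
  simple_graph e ->
  is_line_graph e ->
  connected_graph e ->
  no_isolated e ->
  regular_of e k ->
  (3 < k)%N ->
  max_clique_partitionable e ->
  entropy_symmetric R e.
Proof.
move=> [esym eirr] [T [eH [[symH irrH] [f [finj fedge _ fadj]]]]] _ _ reg k4 [Q [hQ hQC]] P hP.
have n0 : (0 < #|V|)%N.
  case: hP => _ P1; rewrite lt0n; apply/negP => /eqP h; move: P1.
  rewrite big1; first by move/eqP; rewrite eq_sym GRing.oner_eq0.
  by move=> i _; move: (card0_eq h i); rewrite !inE.
have [v0 _] := card_gt0P n0.
have fP : forall v, exists x y, x != y /\ f v = [set x; y].
  move=> v; have [x [y [hxy fv]]] := fedge v; exists x, y; split => //.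
  by apply: contraTneq hxy => ->; rewrite irrH.
have [c cP] := konig (hpp eirr fP fadj v0 hQ hQC reg k4) (hqq eirr fP finj fadj v0 hQ hQC reg k4).
have colP := col_proper esym eirr fP finj fadj v0 hQ hQC reg k4 cP.
have wpos : (0 < clique_number e)%N.
  by have := w_ge3 eirr fP fadj v0 reg k4; clear; lia.
have h1 := ent_upper colP wpos hP. have h2 := ent_lower R colP wpos hQ hQC n0. exact: Order.le_trans h1 h2.
Qed.
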